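(* Let $F$ be a Banach lattice, $\tau$ a linear topology on $F$ weaker than the norm topology, $E\subset F$ a closed sublattice, and $\pi$ a linear topology on $E$ with the Kadec-Pelczynski property (relative to the Banach lattice $E$). Suppose there is a linear map $T:F\to E$ which is $\tau$-to-$\pi$ continuous and such that $\mathrm{Id}_F-T$ is $\tau$-to-norm continuous. Then $\tau$ has the Kadec-Pelczynski property.
   Context: For a Banach lattice $G$ with unit sphere $\mathrm{S}_G$, a sequence $(e_n)$ is almost disjoint if there is a disjoint sequence $(g_n)\subset G$ ($|g_n|\wedge|g_m|=0$, $n\ne m$) with $\|e_n-g_n\|\to0$. A linear topology $\sigma$ on $G$ has the Kadec-Pelczynski property if whenever $(f_p)_{p\in P}\subset\mathrm{S}_G$ is a $\sigma$-null net and $(q_n)_{n\in\mathbb{N}}\subset P$, there are $p_n\in P$ with $p_n\ge q_n$ for all $n$ such that $(f_{p_n})_n$ is almost disjoint. *)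

(* Defs.v *)
From HB Require Import structures.
From mathcomp Require Import all_boot all_order all_algebra.
From mathcomp Require Import all_classical all_reals topology normedtype sequences.
Set Implicit Arguments. Unset Strict Implicit. Unset Printing Implicit Defensive.
Import Order.TTheory GRing.Theory Num.Theory.
Import numFieldNormedType.Exports.
Local Open Scope classical_set_scope.
Local Open Scope ring_scope.

Section BanachLattice.
Variables (R : realType) (V : normedModType R) (join : V -> V -> V).

Definition lle (x y : V) : Prop := join x y = y.
Definition lmeet (x y : V) : V := - join (- x) (- y).
Definition labs (x : V) : V := join x (- x).

(* Together
   with completeness of V (a [completeNormedModType]) this is a Banach lattice. *)
Record is_banach_lattice : Prop := {
  bl_joinC : forall x y, join x y = join y x;
  bl_joinA : forall x y z, join x (join y z) = join (join x y) z;
  bl_joinxx : forall x, join x x = x;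
  bl_add : forall x y z, lle x y -> lle (x + z) (y + z);
  bl_scale : forall (c : R) x y, 0 <= c -> lle x y -> lle (c *: x) (c *: y);
  bl_norm : forall x y, lle (labs x) (labs y) -> `|x| <= `|y| }.

Record linear_topology (sigma : set (set V)) : Prop := {
  lt_setT : sigma setT;
  lt_setI : forall U W, sigma U -> sigma W -> sigma (U `&` W);
  lt_bigcup : forall (I : Type) (U : I -> set V),
      (forall i, sigma (U i)) -> sigma (\bigcup_i U i);
  lt_add : forall x y W, sigma W -> W (x + y) ->
      exists U1 U2, [/\ sigma U1, sigma U2, U1 x, U2 y &
                        forall u1 u2, U1 u1 -> U2 u2 -> W (u1 + u2)];
  lt_scale : forall (c : R) x W, sigma W -> W (c *: x) ->
      exists d : R, 0 < d /\ exists U, [/\ sigma U, U x &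
         forall (c' : R) u, `|c' - c| < d -> U u -> W (c' *: u)] }.

Definition directed (P : Type) (le : P -> P -> Prop) : Prop :=
  (forall p, le p p) /\ (forall p q r, le p q -> le q r -> le p r) /\
  (forall p q, exists r, le p r /\ le q r).

Definition net_null (sigma : set (set V)) (P : Type) (le : P -> P -> Prop)
    (f : P -> V) : Prop :=
  forall U, sigma U -> U 0 -> exists p0, forall p, le p0 p -> U (f p).

Definition disjoint_seq (g : nat -> V) : Prop :=
  forall n m, n <> m -> lmeet (labs (g n)) (labs (g m)) = 0.

Definition almost_disjoint (e : nat -> V) : Prop :=
  exists g : nat -> V, disjoint_seq g /\ (fun n => `|e n - g n|) @ \oo --> (0 : R).

Definition KP_property (sigma : set (set V)) : Prop :=
  forall (P : Type) (le : P -> P -> Prop) (f : P -> V),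
    directed le -> (forall p, `|f p| = 1) -> net_null sigma le f ->
    forall q : nat -> P, exists p : nat -> P,
      (forall n, le (q n) (p n)) /\ almost_disjoint (fun n => f (p n)).

End BanachLattice.

(* Main.v *)
Require Import Defs.
From HB Require Import structures.
From mathcomp Require Import all_boot all_order all_algebra.
From mathcomp Require Import all_classical all_reals topology normedtype sequences.
Import Order.TTheory GRing.Theory Num.Theory.
Import numFieldNormedType.Exports.
Local Open Scope classical_set_scope.
Local Open Scope ring_scope.


From mathcomp Require Import lra.

Lemma inv_near1 (R : realType) (x eta d : R) : 2^-1 < x -> `|x - 1| <= eta ->
  eta < d / 2 -> `|x^-1 - 1| < d.
Proof.
move=> hx hxe hed.
have x0 : 0 < x by apply: lt_trans hx; rewrite invr_gt0.
have -> : x^-1 - 1 = (1 - x) / x.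
  by rewrite mulrBl mul1r divff ?gt_eqF.
rewrite normrM normfV (gtr0_norm x0) ltr_pdivrMr // distrC.
have : 0 <= `|x - 1| by [].
have : (2:R)^-1 = 1/2 by rewrite mul1r.
move=> h2; rewrite h2 in hx; nra.
Qed.

Theorem mainTheorem15 (R : realType)
  (F : completeNormedModType R) (joinF : F -> F -> F)
  (hF : is_banach_lattice joinF)
  (tau : set (set F)) (htau : linear_topology tau)
  (tau_weak : forall U, tau U -> open U)
  (E : completeNormedModType R) (joinE : E -> E -> E)
  (hE : is_banach_lattice joinE)
  (j : E -> F)
  (j_add : forall x y, j (x + y) = j x + j y)
  (j_scale : forall (c : R) x, j (c *: x) = c *: j x)
  (j_join : forall x y, j (joinE x y) = joinF (j x) (j y))
  (j_norm : forall x, `|j x| = `|x|)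
  (pi : set (set E)) (hpi : linear_topology pi)
  (hKP : KP_property joinE pi)
  (T : F -> E)
  (T_add : forall x y, T (x + y) = T x + T y)
  (T_scale : forall (c : R) x, T (c *: x) = c *: T x)
  (T_cont : forall V, pi V -> tau (T @^-1` V))
  (IT_cont : forall W : set F, open W -> tau ((fun x => x - j (T x)) @^-1` W)) :
  KP_property joinF tau.
Proof.
move=> P le f hdir hnorm hnull q.
have T0 : T 0 = 0 by rewrite -(scale0r (0:F)) T_scale scale0r.
have j0 : j 0 = 0 by rewrite -(scale0r (0:E)) j_scale scale0r.
have jN : forall x, j (- x) = - j x by move=> x; rewrite -scaleN1r j_scale scaleN1r.
have jB : forall x y, j (x - y) = j x - j y by move=> x y; rewrite j_add jN.
pose N := fun p => f p - j (T (f p)).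
have hN : forall e : R, 0 < e -> exists p0, forall p, le p0 p -> `|N p| < e.
  move=> e e0.
  have [p0 hp0] := hnull _ (IT_cont _ (ball_open (0:F) e)) (ltac:(rewrite /preimage /= T0 j0 subr0; exact: ballxx)).
  exists p0 => p /hp0; rewrite /preimage /= -ball_normE /= sub0r normrN //.
have hTN : forall p, `| `|T (f p)| - 1 | <= `|N p|.
  by move=> p; rewrite -(hnorm p) -j_norm distrC ler_dist_dist.
have [p0 _] : exists p : P, True by exists (q 0%N).
have [p1 hp1] := hN (2^-1) ltac:(by rewrite invr_gt0).
have Tf0 : T (f p1) != 0.
  apply/eqP => H; have := hTN p1; have := hp1 p1 (hdir.1 p1).
  by rewrite H normr0 sub0r normrN normr1; lra.
pose e0 := `|T (f p1)|^-1 *: T (f p1).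
pose g := fun p => if T (f p) == 0 then e0 else `|T (f p)|^-1 *: T (f p).
have normsc : forall x : E, x != 0 -> `| `|x|^-1 *: x| = 1.
  move=> x x0; rewrite normrZ ger0_norm ?invr_ge0 // mulVf // normr_eq0 //.
have gn : forall p, `|g p| = 1.
  by move=> p; rewrite /g; case: eqP => [_|/eqP H]; apply: normsc.
have gnull : net_null pi le g.
  move=> U hU U0.
  have [d [d0 [U' [hU' U'0 hsc]]]] := lt_scale (c:=1) (x:=0) hpi hU (ltac:(by rewrite scaler0)).
  have [p2 hp2] := hnull _ (T_cont _ hU') (ltac:(by rewrite /preimage /= T0)).
  have mpos : 0 < Num.min (2^-1) (d/2) :> R.
    by rewrite lt_min; apply/andP; split; [rewrite invr_gt0 | apply: divr_gt0].
  have [p3 hp3] := hN _ mpos.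
  have [r [h2 h3]] := hdir.2.2 p2 p3.
  exists r => p hp.
  have := hp3 p (hdir.2.1 _ _ _ h3 hp); rewrite lt_min => /andP[Na Nd].
  have := hTN p; rewrite ler_distl => /andP[hx _].
  have hx' : 2^-1 < `|T (f p)|.
    have : (2:R)^-1 = 1/2 by rewrite mul1r.
    move=> h2'; rewrite h2' in Na *; lra.
  rewrite /g; case: eqP => [H|_].
    by move: hx'; rewrite H normr0 ltNge invr_ge0 ler0n.
  apply: hsc; last exact: (hp2 p (hdir.2.1 _ _ _ h2 hp)).
  exact: inv_near1 hx' (hTN p) Nd.
have [pn hpn] := @choice _ _ (fun (n : nat) p0 => forall p, le p0 p -> `|N p| < n.+1%:R^-1)
   (fun n => hN (n.+1%:R^-1) ltac:(by rewrite invr_gt0 ltr0n)).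
have [q' hq'] := @choice _ _ (fun n r => le (q n) r /\ le (pn n) r) (fun n => hdir.2.2 (q n) (pn n)).
have [p' [hle [gE [hdisj hcvg]]]] := hKP P le g hdir gn gnull q'.
exists p'; split.
  by move=> n; exact: hdir.2.1 _ _ _ (hq' n).1 (hle n).
exists (fun n => j (gE n)); split.
  move=> n m nm.
  have key : forall x y, lmeet joinF (labs joinF (j x)) (labs joinF (j y)) =
     j (lmeet joinE (labs joinE x) (labs joinE y)).
    by move=> x y; rewrite /lmeet /labs !(jN, j_join).
  by rewrite key hdisj // j0.
apply/cvgr0Pnorm_lt => eps eps0.
have e2 : 0 < eps / 2 by apply: divr_gt0.
have e4 : 0 < eps / 4 by apply: divr_gt0.
have A := @cvgr0_norm_lt _ _ _ _ eventually_filter _ hcvg _ e2.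
have B := @cvgr0_norm_lt _ _ _ _ eventually_filter _ (@cvg_harmonic R) _ e4.
apply: (filterS2 _ _ A B) => n An Bn.
rewrite /= in An Bn.
have hb : `|N (p' n)| < n.+1%:R^-1.
  exact: hpn n _ (hdir.2.1 _ _ _ (hq' n).2 (hle n)).
rewrite ger0_norm ?invr_ge0 ?ler0n // in Bn.
rewrite normr_id in An *.
set x := T (f (p' n)) in hb An *.
have h1 : n.+1%:R^-1 <= (1:R) by rewrite invf_le1 ?ltr0n // ler1n.
have x0 : x != 0.
  apply/eqP => H; have := hTN (p' n); rewrite -/x H normr0 sub0r normrN normr1.
  by move=> H1; have := lt_le_trans (le_lt_trans H1 hb) h1; rewrite ltxx.
have gx : g (p' n) = `|x|^-1 *: x by rewrite /g -/x (negbTE x0).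
rewrite gx in An.
have -> : f (p' n) - j (gE n) =
   N (p' n) + (j x - j (`|x|^-1 *: x)) + j (`|x|^-1 *: x - gE n).
  by rewrite jB /N -/x !addrA !subrK.
have hmid : `|j x - j (`|x|^-1 *: x)| <= `|N (p' n)|.
  rewrite -jB j_norm -{1}(scale1r x) -scalerBl normrZ.
  rewrite -[X in _ * X]normr_id -normrM mulrBl mul1r mulVf ?normr_eq0 //.
  exact: hTN.
rewrite normr_id. apply: (le_lt_trans (ler_normD _ _)).
apply: (le_lt_trans (lerD (ler_normD _ _) (lexx _))).
rewrite j_norm.
have : 0 <= `|N (p' n)| by [].
move: hb hmid An Bn; rewrite /harmonic /=; move: (n.+1%:R^-1 : R) => h. lra.
Qed.
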